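(* Let $Q=(q_n)_{n\ge1}$ be a basic sequence that is infinite in limit, and let $F$ be a $Q$-special sequence. Then $x_F$ is not simply $Q$-normal.
   Context: A basic sequence is a sequence $Q=(q_n)_{n\ge1}$ of integers with $q_n\ge 2$; it is infinite in limit if $q_n\to\infty$. $\mathbb{N}$ denotes the positive integers. For each positive integer $j$ let $\nu_j=\min\{N : q_m\ge 2j^2 \text{ for all } m\ge N\}$. Define $l_1=\max(\nu_2-1,1)$ and, recursively for $i\ge 2$, $l_i=\max\big(\min\{k\in\mathbb{N} : l_1+2l_2+\cdots+(i-1)l_{i-1}+ik\ge \nu_{i+1}-1\},1\big)$. Put $L_i=\sum_{j=1}^i jl_j$ (with $L_0=0$). Let $S_Q=\{(a,b,c)\in\mathbb{N}^3 : b\le l_a,\ c\le a\}$ and $\phi_Q(a,b,c)=L_{a-1}+(b-1)a+c$; $\phi_Q$ is a bijection $S_Q\to\mathbb{N}$. A $Q$-special sequence is a family of integers $F=(F_{(a,b,c)})_{(a,b,c)\in S_Q}$ with $F_{(a,b,1)}=0$ for all $(a,b,1)\in S_Q$ and $\frac{F_{(a,b,c)}}{q_{\phi_Q(a,b,c)}}\in\left[\frac{c-1}{a}-\frac{1}{2a^2},\frac{c-1}{a}+\frac{1}{2a^2}\right]$ for $(a,b,c)\in S_Q$ with $c>1$. For such $F$ put $E_{F,n}=F_{\phi_Q^{-1}(n)}$ and $x_F=\sum_{n=1}^\infty \frac{E_{F,n}}{q_1q_2\cdots q_n}$; this is the $Q$-Cantor series expansion of $x_F$, with digits $E_{F,n}$.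 For a real $x\in[0,1)$ with $Q$-Cantor series expansion $x=\sum_n \frac{E_n}{q_1\cdots q_n}$ ($E_n\in\{0,\dots,q_n-1\}$, $E_n\ne q_n-1$ infinitely often) and a nonnegative integer $d$, let $N_n^Q(d,x)=\#\{1\le j\le n : E_j=d\}$ and $Q_n^{(1)}=\sum_{j=1}^n\frac1{q_j}$. The number $x$ is simply $Q$-normal if $\lim_{n\to\infty} N_n^Q(d,x)/Q_n^{(1)}=1$ for every nonnegative integer $d$ (blocks of length $1$). *)

(* Defs.v *)
From HB Require Import structures.
From mathcomp Require Import all_boot all_order all_algebra zify.
From mathcomp Require Import boolp classical_sets reals topology normedtype sequences.
Set Implicit Arguments. Unset Strict Implicit. Unset Printing Implicit Defensive.
Import Order.TTheory GRing.Theory Num.Theory.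
Import numFieldNormedType.Exports.

(* A basic sequence q = (q_n)_{n>=1} is a function nat -> nat; the value q 0
   is irrelevant (junk) and never used. *)

Definition basic_seq (q : nat -> nat) : Prop := forall n, (1 <= n)%N -> (2 <= q n)%N.
Definition infinite_in_limit (q : nat -> nat) : Prop :=
  forall M, exists N, forall n, (N <= n)%N -> (M <= q n)%N.

Definition nu_pred (q : nat -> nat) (j N : nat) : bool :=
  `[< (0 < N)%N /\ forall m, (N <= m)%N -> (2 * j ^ 2 <= q m)%N >].

Definition nu (q : nat -> nat) (j : nat) : nat :=
  match pselect (exists N, nu_pred q j N) with
  | left h => ex_minn h
  | right _ => 0%N
  end.

Lemma minK_ex (m L v : nat) :
  exists k, (0 < k)%N && (v - 1 <= L + m.+1 * k)%N.
Proof. exists v.+1; apply/andP; split=> //; nia. Qed.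

Definition minK (m L v : nat) : nat := ex_minn (minK_ex m L v).

(* lL q i = (l_{i+1}, L_{i+1}) *)
Fixpoint lL (q : nat -> nat) (i : nat) : nat * nat :=
  match i with
  | 0 => let l := maxn (nu q 2 - 1) 1 in (l, l)
  | i'.+1 =>
      let Lprev := (lL q i').2 in
      let l := maxn (minK i'.+1 Lprev (nu q i'.+3)) 1 in
      (l, (Lprev + i'.+2 * l)%N)
  end.

(* l_i (i >= 1) and L_i = sum_{j=1}^i j l_j, with L_0 = 0 *)
Definition l_ (q : nat -> nat) (i : nat) : nat :=
  if i is i'.+1 then (lL q i').1 else 0%N.
Definition L_ (q : nat -> nat) (i : nat) : nat :=
  if i is i'.+1 then (lL q i').2 else 0%N.

Definition inS (q : nat -> nat) (a b c : nat) : bool :=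
  [&& (0 < a)%N, (0 < b)%N, (0 < c)%N, (b <= l_ q a)%N & (c <= a)%N].

Definition phi (q : nat -> nat) (a b c : nat) : nat :=
  (L_ q a.-1 + b.-1 * a + c)%N.

(* the inverse of phi_Q (for n >= 1): a is the least a with n <= L_a,
   then n = L_{a-1} + (b-1) a + c with 1 <= c <= a. *)
Definition phi_inv_a (q : nat -> nat) (n : nat) : nat :=
  find (fun a => (n <= L_ q a)%N) (iota 0 n.+1).
Definition phi_inv (q : nat -> nat) (n : nat) : nat * nat * nat :=
  let a := phi_inv_a q n in
  let r := (n - L_ q a.-1 - 1)%N in
  (a, (r %/ a).+1, (r %% a).+1).

Local Open Scope classical_set_scope.
Local Open Scope ring_scope.

Definition special (R : realType) (q : nat -> nat) (F : nat -> nat -> nat -> int)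
  : Prop :=
  forall a b c, inS q a b c ->
    (c = 1%N -> F a b c = 0) /\
    ((1 < c)%N ->
       (c.-1%:R / a%:R - 1 / (2 * a%:R ^+ 2) <= (F a b c)%:~R / (q (phi q a b c))%:R :> R)
       /\ ((F a b c)%:~R / (q (phi q a b c))%:R <= c.-1%:R / a%:R + 1 / (2 * a%:R ^+ 2) :> R)).

Definition E_F (q : nat -> nat) (F : nat -> nat -> nat -> int) (n : nat) : int :=
  let: (a, b, c) := phi_inv q n in F a b c.

Definition qprod (R : realType) (q : nat -> nat) (n : nat) : R :=
  \prod_(1 <= k < n.+1) (q k)%:R.

Definition x_F (R : realType) (q : nat -> nat) (F : nat -> nat -> nat -> int) : R :=
  limn (fun N : nat => \sum_(1 <= n < N) ((E_F q F n)%:~R / qprod R q n) : R).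

(* The n-th digit (n >= 1) of the Q-Cantor series expansion of x in [0,1)
   (the expansion with E_n <> q_n - 1 infinitely often):
   E_n = floor(q_1...q_n x) - q_n floor(q_1...q_{n-1} x). *)
Definition cantor_digit (R : realType) (q : nat -> nat) (x : R) (n : nat) : int :=
  Num.floor (qprod R q n * x) - (q n)%:Z * Num.floor (qprod R q n.-1 * x).

Definition Ncount (R : realType) (q : nat -> nat) (d : nat) (x : R) (n : nat) : nat :=
  #|[set j : 'I_n.+1 | (0 < j)%N && (cantor_digit q x j == d%:Z)]|.

Definition Q1 (R : realType) (q : nat -> nat) (n : nat) : R :=
  \sum_(1 <= j < n.+1) ((q j)%:R)^-1.

Definition simply_normal (R : realType) (q : nat -> nat) (x : R) : Prop :=
  forall d : nat, (fun n => (Ncount q d x n)%:R / Q1 R q n) @ \oo --> (1 : R).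

(* Main.v *)
Require Import Defs.
From HB Require Import structures.
From mathcomp Require Import all_boot all_order all_algebra zify ring lra.
From mathcomp Require Import boolp classical_sets reals topology normedtype sequences.
Set Implicit Arguments. Unset Strict Implicit. Unset Printing Implicit Defensive.
Import Order.TTheory GRing.Theory Num.Theory.
Import numFieldNormedType.Exports.

Section Comb.
Variable q : nat -> nat.

Lemma LS a : L_ q a.+1 = (L_ q a + a.+1 * l_ q a.+1)%N.
Proof. by case: a => [|a] //=; rewrite /L_ /l_ /= add0n mul1n. Qed.

Lemma l_pos a : (0 < l_ q a.+1)%N.
Proof. by case: a => [|a]; rewrite /l_ /= leq_maxr. Qed.

Lemma L_ge a : (a <= L_ q a)%N.
Proof.
elim: a => [|a IH] //; rewrite LS; have := l_pos a; nia.
Qed.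

Lemma L_mono m n : (m <= n)%N -> (L_ q m <= L_ q n)%N.
Proof.
move=> /subnK <-; elim: (n - m)%N => [|d IH] //.
by rewrite addSn LS (leq_trans IH) ?leq_addr.
Qed.

Lemma L_nu a : (nu q a.+2 - 1 <= L_ q a.+1)%N.
Proof.
case: a => [|a]; first by rewrite /L_ /= leq_maxl.
rewrite /L_ /=.
rewrite /minK; case: ex_minnP => k /andP [_ hk] _.
apply: (leq_trans hk); rewrite leq_add2l leq_mul2l leq_maxl orbT //.
Qed.

Lemma nuP (hinf : infinite_in_limit q) j m : (nu q j <= m)%N -> (2 * j ^ 2 <= q m)%N.
Proof.
rewrite /nu; case: pselect => [h|hn].
  by case: ex_minnP => N /asboolP [_ H] _; apply: H.
exfalso; apply: hn; have [N0 HN] := hinf (2 * j ^ 2)%N.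
exists N0.+1; apply/asboolP; split => // m' hm; apply: HN; exact: ltnW.
Qed.

Lemma q_block (hQ : basic_seq q) (hinf : infinite_in_limit q) a j :
  (L_ q a < j)%N -> (2 * a.+1 <= q j)%N.
Proof.
case: a => [|a] hj; first by rewrite muln1; apply: hQ; case: j hj.
have := L_nu a => h1.
have hn : (nu q a.+2 <= j)%N by lia.
have := nuP hinf hn; nia.
Qed.

Lemma phi_inv_aE a n : (L_ q a < n <= L_ q a.+1)%N -> phi_inv_a q n = a.+1.
Proof.
move=> /andP [h1 h2]; rewrite /phi_inv_a.
have ha : (a.+1 < n.+1)%N by have := L_ge a; lia.
have hhas : has (fun a0 => (n <= L_ q a0)%N) (iota 0 n.+1).
  by apply/hasP; exists a.+1; rewrite ?mem_iota //=; lia.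
set i := find _ _.
have hi : (i < n.+1)%N by rewrite -(size_iota 0 n.+1) -has_find.
have := nth_find 0 hhas; rewrite -/i nth_iota // add0n => hLi.
have [hlt|hgt|//] := ltngtP i a.+1.
  have := @L_mono i a; lia.
have := before_find 0 hgt; by rewrite nth_iota // add0n h2.
Qed.

Lemma block_ex n : (0 < n)%N -> exists a, (L_ q a < n <= L_ q a.+1)%N.
Proof.
move=> n0.
have ex : exists k, (n <= L_ q k)%N by exists n; exact: L_ge.
case: (ex_minnP ex) => k hk hmin.
case: k hk hmin => [|a] hk hmin; first by move: hk; rewrite /L_; lia.
exists a; rewrite hk andbT ltnNge; apply/negP => /hmin; lia.
Qed.

Lemma phi_invE a r : (r < a.+1 * l_ q a.+1)%N ->
  phi_inv q (L_ q a + r + 1) = (a.+1, (r %/ a.+1).+1, (r %% a.+1).+1)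
  /\ inS q a.+1 (r %/ a.+1).+1 (r %% a.+1).+1
  /\ phi q a.+1 (r %/ a.+1).+1 (r %% a.+1).+1 = (L_ q a + r + 1)%N.
Proof.
move=> hr.
have ha : phi_inv_a q (L_ q a + r + 1) = a.+1 by apply: phi_inv_aE; rewrite LS; lia.
have hr' : (L_ q a + r + 1 - L_ q a.+1.-1 - 1 = r)%N by rewrite /=; lia.
split; first by rewrite /phi_inv ha hr'.
split.
  rewrite /inS /= ltn_pmod //= andbT.
  by rewrite ltn_divLR // mulnC.
rewrite /phi /= addnS -addnA -divn_eq; lia.
Qed.
End Comb.
Section Digits.
Variables (R : realType) (q : nat -> nat) (F : nat -> nat -> nat -> int).
Hypothesis hQ : basic_seq q.
Hypothesis hF : special R q F.
Local Open Scope ring_scope.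

Lemma E_block a r : (r < a.+1 * l_ q a.+1)%N ->
  E_F q F (L_ q a + r + 1) = F a.+1 (r %/ a.+1).+1 (r %% a.+1).+1.
Proof. by move=> /phi_invE [h _]; rewrite /E_F h. Qed.

Lemma E_zero a r : (r < a.+1 * l_ q a.+1)%N -> (r %% a.+1 = 0)%N ->
  E_F q F (L_ q a + r + 1) = 0.
Proof.
move=> hr hm; rewrite E_block //; have [_ [hin _]] := phi_invE hr.
by have [h _] := hF hin; apply: h; rewrite hm.
Qed.

Lemma real_ineq (A c X : R) : 1 <= A -> c <= A - 1 -> A * X = 1 ->
  c * X + X * X / 2 < 1.
Proof.
move=> hA hc hX.
have hX0 : 0 < X by nra.
have hX1 : X <= 1 by nra.
nra.
Qed.

Lemma real_ineq2 (A X : R) : 1 <= A -> A * X = 1 -> 0 < X - X * X / 2.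
Proof. move=> hA hX; have hX0 : 0 < X by nra. have hX1 : X <= 1 by nra. nra. Qed.

Lemma E_range n : (0 < n)%N -> 0 <= E_F q F n /\ E_F q F n < (q n)%:Z.
Proof.
move=> n0; have [a ha] := block_ex q n0.
set r := (n - L_ q a - 1)%N.
have hr : (r < a.+1 * l_ q a.+1)%N by move: ha; rewrite LS /r; lia.
have -> : n = (L_ q a + r + 1)%N by rewrite /r; lia.
have [_ [hin hphi]] := phi_invE hr.
rewrite E_block //.
have [h1 h2] := hF hin.
have hq : (2 <= q (L_ q a + r + 1))%N by apply: hQ; lia.
case: (posnP (r %% a.+1)) => hm.
  by rewrite h1 ?hm //; split => //; rewrite ltz_nat; lia.
have hc2 : (1 < (r %% a.+1).+1)%N by lia.
have [hlo hhi] := h2 hc2.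
rewrite hphi in hlo hhi.
set Fv := F _ _ _ in hlo hhi *.
set Q := q _ in hq hlo hhi *.
set A : R := a.+1%:R.
have hA : 1 <= A by rewrite /A ler1n.
set X := A^-1.
have hA0 : A != 0 by rewrite gt_eqF //; exact: lt_le_trans ltr01 hA.
have hX : A * X = 1 by rewrite /X divff.
have hQ0 : (0 : R) < Q%:R by rewrite ltr0n; lia.
have e1 : 1 / (2 * A ^+ 2) = X * X / 2.
  by rewrite /X; field; rewrite nat1r pnatr_eq0.
rewrite -/A in hlo hhi; rewrite e1 in hlo hhi.
have hc : ((r %% a.+1).+1.-1)%:R <= A - 1 :> R.
  rewrite /A /= -(natrB _ (_ : (1 <= a.+1)%N)) // ler_nat; have := ltn_pmod r (ltn0Sn a); lia.
have hc1 : 1 <= ((r %% a.+1).+1.-1)%:R :> R by rewrite /= ler1n; lia.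
split.
  have : 0 < Fv%:~R / Q%:R :> R.
    apply: (lt_le_trans _ hlo); rewrite -/X.
    have := real_ineq2 hA hX; have hX0 : 0 < X by nra. nra.
  rewrite pmulr_lgt0 ?invr_gt0 // ltr0z => /ltW //.
have : Fv%:~R / Q%:R < 1 :> R.
  apply: (le_lt_trans hhi).
  rewrite -/X. have := real_ineq hA hc hX. nra.
rewrite ltr_pdivrMr // mul1r -(ltr_int R) /=.
by [].
Qed.
End Digits.
Section Analysis.
Variables (R : realType) (q : nat -> nat) (F : nat -> nat -> nat -> int).
Hypothesis hQ : basic_seq q.
Hypothesis hF : special R q F.
Local Open Scope ring_scope.

Let P n := qprod R q n.
Let E n : R := (E_F q F n)%:~R.
Let S N : R := \sum_(1 <= n < N) (E n / P n).

Lemma P0 : P 0 = 1. Proof. by rewrite /P /qprod big_geq. Qed.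
Lemma PS n : P n.+1 = P n * (q n.+1)%:R.
Proof. by rewrite /P /qprod big_nat_recr. Qed.
Lemma qpos n : 2%:R <= (q n.+1)%:R :> R.
Proof. by rewrite ler_nat; apply: hQ. Qed.
Lemma Ppos n : 0 < P n.
Proof.
elim: n => [|n IH]; first by rewrite P0.
rewrite PS mulr_gt0 //; apply: lt_le_trans (qpos n); by [].
Qed.
Lemma S0 : S 0 = 0. Proof. by rewrite /S big_geq. Qed.
Lemma S1 : S 1 = 0. Proof. by rewrite /S big_geq. Qed.
Lemma SS n : S n.+2 = S n.+1 + E n.+1 / P n.+1.
Proof. by rewrite /S big_nat_recr. Qed.

Lemma E_ge0 n : 0 <= E n.+1.
Proof. by rewrite /E ler0z; have [] := E_range hQ hF (ltn0Sn n). Qed.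
Lemma E_le n : E n.+1 <= (q n.+1)%:R - 1.
Proof.
have [_ h] := E_range hQ hF (ltn0Sn n).
have h' : E_F q F n.+1 <= (q n.+1)%:Z - 1 by lia.
rewrite -(ler_int R) intrB /= in h'; rewrite /E; move: h'; rewrite pmulrn //.
Qed.

Lemma termle n : E n.+1 / P n.+1 <= (P n)^-1 - (P n.+1)^-1.
Proof.
have hP := Ppos n; have hq := qpos n.
rewrite PS.
have -> : (P n)^-1 - (P n * (q n.+1)%:R)^-1 = ((q n.+1)%:R - 1) / (P n * (q n.+1)%:R).
  field; apply/andP; split; rewrite gt_eqF //; apply: lt_le_trans hq; by [].
rewrite ler_pM2r ?E_le // invr_gt0 mulr_gt0 //; apply: lt_le_trans hq; by [].
Qed.

Lemma term_ge0 n : 0 <= E n.+1 / P n.+1.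
Proof. by rewrite divr_ge0 ?E_ge0 // ltW // Ppos. Qed.

Lemma tail n d : S (n + d).+1 - S n.+1 <= (P n)^-1 - (P (n + d))^-1.
Proof.
elim: d => [|d IH]; first by rewrite addn0 !subrr.
rewrite addnS SS; have := termle (n + d); lra.
Qed.

Lemma S_nd : nondecreasing_seq S.
Proof.
apply/nondecreasing_seqP => n; case: n => [|n]; first by rewrite S0 S1.
by rewrite SS lerDl term_ge0.
Qed.

Lemma S_le1 k : S k <= 1.
Proof.
case: k => [|k]; first by rewrite S0.
have := tail 0 k; rewrite S1 P0 invr1 add0n subr0.
have := Ppos k => hP; have : 0 < (P k)^-1 by rewrite invr_gt0.
lra.
Qed.

Lemma S_cvg : cvgn S.
Proof.
apply: nondecreasing_is_cvgn; first exact: S_nd.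
by exists 1 => _ [k _ <-]; exact: S_le1.
Qed.

Lemma lower n : S n.+1 <= limn S.
Proof. exact: (nondecreasing_cvgn_le S_nd S_cvg n.+1). Qed.

Lemma upper n : limn S < S n.+1 + (P n)^-1.
Proof.
set m := L_ q n.
have hm : (n <= m)%N by exact: L_ge.
have E0 : E m.+1 = 0.
  rewrite /E (_ : m.+1 = L_ q n + 0 + 1)%N; last by rewrite /m; lia.
  by rewrite (E_zero hF) // muln_gt0 /= l_pos.
set d := (P m)^-1 - (P m.+1)^-1.
have hd : 0 < d.
  rewrite /d PS subr_gt0 ltf_pV2 ?posrE ?Ppos ?mulr_gt0 ?Ppos //;
    try (apply: lt_le_trans (qpos m); by []).
  rewrite ltr_pMr ?Ppos //; apply: lt_le_trans (qpos m); by rewrite ltr1n.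
have B : forall k, (m.+1 <= k)%N -> S k.+1 <= S n.+1 + (P n)^-1 - d.
  move=> k hk.
  have t1 := tail n (m - n).
  rewrite subnKC // in t1.
  have t2 := tail m.+1 (k - m.+1).
  rewrite subnKC // in t2.
  have e := SS m; rewrite E0 mul0r addr0 in e.
  rewrite e in t2.
  have := Ppos k => hP; have : 0 < (P k)^-1 by rewrite invr_gt0.
  rewrite /d; lra.
have : limn S <= S n.+1 + (P n)^-1 - d.
  apply: limr_le; first exact: S_cvg.
  exists m.+2 => // k /= hk.
  have -> : k = k.-1.+1 by lia.
  apply: B; lia.
lra.
Qed.

Fixpoint Iint (n : nat) : int :=
  if n is k.+1 then (q k.+1)%:Z * Iint k + E_F q F k.+1 else 0.

Lemma Iint_eq n : (Iint n)%:~R = P n * S n.+1.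
Proof.
elim: n => [|n IH]; first by rewrite /= S1 mulr0.
rewrite /= intrD intrM IH SS PS pmulrn.
have hP := Ppos n; have hq := qpos n.
have hq0 : (q n.+1)%:R != 0 :> R by rewrite gt_eqF //; apply: lt_le_trans hq.
by rewrite /E; field; rewrite hq0 /= gt_eqF.
Qed.

Lemma floor_eq n : Num.floor (qprod R q n * x_F R q F) = Iint n.
Proof.
apply: floor_def; rewrite intrD Iint_eq.
have hP := Ppos n.
have hl := lower n; have hu := upper n.
change (x_F R q F) with (limn S).
change (qprod R q n) with (P n).
have hPi : P n * (P n)^-1 = 1 by rewrite divff // gt_eqF.
apply/andP; split; first by rewrite ler_pM2l.
have := ltr_pM2l hP; move=> h.
have : P n * limn S < P n * (S n.+1 + (P n)^-1) by rewrite ltr_pM2l.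
rewrite mulrDr hPi //.
Qed.

Lemma digit n : cantor_digit q (x_F R q F) n.+1 = E_F q F n.+1.
Proof.
rewrite /cantor_digit /= !floor_eq /=; lia.
Qed.
End Analysis.

Section Counting.
Variables (R : realType) (q : nat -> nat) (F : nat -> nat -> nat -> int).
Hypothesis hQ : basic_seq q.
Hypothesis hinf : infinite_in_limit q.
Hypothesis hF : special R q F.
Local Open Scope ring_scope.

Let Zc n : nat := (\sum_(1 <= j < n.+1) (E_F q F j == 0 : nat))%N.

Lemma Ncount_eq n : Ncount q 0 (x_F R q F) n = Zc n.
Proof.
rewrite /Ncount -sum1_card.
rewrite big_mkcond /=.
under eq_bigr => i _ do rewrite /in_mem /= /in_set asboolb.
rewrite -(big_mkord xpredT (fun j => if (0 < j)%N && (cantor_digit q (x_F R q F) j == 0%:Z) then 1%N else 0%N)).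
rewrite big_ltn // /= add0n.
apply: eq_big_nat => j /andP [hj _]; case: j hj => // j _ /=.
by rewrite (digit hQ hF); case: eqP.
Qed.

Lemma reindex (f : nat -> nat) a :
  (\sum_((L_ q a).+1 <= j < (L_ q a.+1).+1) f j =
   \sum_(0 <= r < a.+1 * l_ q a.+1) f (L_ q a + r + 1))%N.
Proof.
rewrite -{1}(add0n (L_ q a).+1) big_addn (_ : ((L_ q a.+1).+1 - (L_ q a).+1 = a.+1 * l_ q a.+1)%N); last by rewrite LS; lia.
by apply: eq_bigr => r _; congr f; lia.
Qed.

Lemma reindexR (f : nat -> R) a :
  \sum_((L_ q a).+1 <= j < (L_ q a.+1).+1) f j =
   \sum_(0 <= r < a.+1 * l_ q a.+1) f (L_ q a + r + 1).
Proof.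
rewrite -{1}(add0n (L_ q a).+1) big_addn (_ : ((L_ q a.+1).+1 - (L_ q a).+1 = a.+1 * l_ q a.+1)%N); last by rewrite LS; lia.
by apply: eq_bigr => r _; congr f; lia.
Qed.

Lemma Zblock a k : (k <= l_ q a.+1)%N ->
  (k <= \sum_(0 <= r < a.+1 * k) (E_F q F (L_ q a + r + 1) == 0 : nat))%N.
Proof.
elim: k => [|k IH] hk //.
rewrite (big_cat_nat _ (n := a.+1 * k)) ?leq_mul2l ?leqnSn ?orbT //=.
rewrite (big_ltn (m := a.+1 * k)); last by rewrite ltn_mul2l /=.
rewrite (E_zero hF); last by rewrite modnMr.
  by rewrite eqxx /=; have := IH (ltnW hk); lia.
by rewrite ltn_mul2l /=.
Qed.

Lemma Qblock a :
  2 * \sum_(0 <= r < a.+1 * l_ q a.+1) ((q (L_ q a + r + 1))%:R)^-1 <= (l_ q a.+1)%:R :> R.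
Proof.
set l := l_ q a.+1.
have h : \sum_(0 <= r < a.+1 * l) ((q (L_ q a + r + 1))%:R)^-1
   <= \sum_(0 <= r < a.+1 * l) ((2 * a.+1)%:R)^-1 :> R.
  apply: ler_sum => r _.
  have hb := q_block hQ hinf (j := (L_ q a + r + 1)%N) (a := a) ltac:(lia).
  rewrite lef_pV2 ?posrE ?ltr0n ?ler_nat //; lia.
rewrite sumr_const_nat subn0 in h.
have e : 2 * ((2 * a.+1)%:R^-1 *+ (a.+1 * l)) = l%:R :> R.
  rewrite -mulr_natr !natrM; field; rewrite nat1r pnatr_eq0 //.
rewrite -e; apply: ler_wpM2l => //.
Qed.

Lemma Q1_split a : Q1 R q (L_ q a.+1) = Q1 R q (L_ q a) +
   \sum_(0 <= r < a.+1 * l_ q a.+1) ((q (L_ q a + r + 1))%:R)^-1.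
Proof.
rewrite /Q1 (big_cat_nat _ (n := (L_ q a).+1)) //; last by rewrite ltnS; apply: L_mono.
by rewrite reindexR.
Qed.

Lemma Zc_split a : Zc (L_ q a.+1) = (Zc (L_ q a) +
   \sum_(0 <= r < a.+1 * l_ q a.+1) (E_F q F (L_ q a + r + 1) == 0 : nat))%N.
Proof.
rewrite /Zc (big_cat_nat _ (n := (L_ q a).+1)) //; last by rewrite ltnS; apply: L_mono.
by rewrite reindex.
Qed.

Lemma main_ineq a : 2 * Q1 R q (L_ q a) <= (Zc (L_ q a))%:R.
Proof.
elim: a => [|a IH]; first by rewrite /Q1 /Zc /L_ big_geq // big_geq // mulr0.
rewrite Q1_split Zc_split natrD mulrDr.
apply: lerD => //; apply: le_trans (Qblock a) _.
by rewrite ler_nat; apply: Zblock.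
Qed.

Lemma Q1_pos n : 0 < Q1 R q n.+1.
Proof.
rewrite /Q1 big_ltn // ltr_pwDl //.
  by rewrite invr_gt0 ltr0n; have := hQ (ltn0Sn 0); lia.
by apply: sumr_ge0 => i _; rewrite invr_ge0.
Qed.
End Counting.
Local Open Scope ring_scope.

Theorem mainTheorem2 (R : realType) (q : nat -> nat)
  (hQ : basic_seq q) (hinf : infinite_in_limit q)
  (F : nat -> nat -> nat -> int) (hF : special R q F) :
  ~ simply_normal q (x_F R q F).
Proof.
move=> hn; have := hn 0%N => hc.
have H32 : (1 : R) < 3 / 2 by lra.
have [M _ HM] := cvgr_lt _ hc _ H32.
have hLM : (M <= L_ q M.+1)%N by have := L_ge q M.+1; lia.
have := HM _ hLM; rewrite /= Ncount_eq //.
have hQp : 0 < Q1 R q (L_ q M.+1).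
  have := L_ge q M.+1; case: (L_ q M.+1) => // k _; exact: Q1_pos.
have := main_ineq hQ hinf hF M.+1.
move=> hi; rewrite ltr_pdivrMr // => hlt.
lra.
Qed.


Local Open Scope ring_scope.
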